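(* In the abruptly-changing incentivized bandit with reward drift where the principal uses Sliding Window UCB with window $\tau$ (as in the context), for all arms $a\in\{1,\dots,K\}$ and all $t\in\{1,\dots,T\}$, $$D_t(\tau,a)\le l\,N_t(a)\sqrt{\xi\log(\min(t,\tau))}.$$
   Context: Arms $\{1,\dots,K\}$, horizon $T$; true rewards $X_t(a)\in[0,1]$ independent with means $\mu_t(a)$. Protocol: the principal recommends $a_t$ by Sliding Window UCB; greedy choice $g_t=\arg\max_a\bar X_t(\tau,a)$; if $a_t\ne g_t$ the principal pays $\chi_t=\bar X_t(\tau,g_t)-\bar X_t(\tau,a_t)$ and the observed reward is $r_t=X_t(a_t)+\delta_t$, $\delta_t=f_t(\chi_t)$; otherwise $\delta_t=0$, $r_t=X_t(a_t)$. Each $f_t$ is non-decreasing, $f_t(0)=0$, Lipschitz with constant $l_t$; $l=\max_tl_t$. Sliding Window UCB (window $\tau$, constant $\xi$): $N_t(\tau,a)$ = number of pulls of $a$ in the last $\tau$ rounds, $\bar X_t(\tau,a)$ = average observed reward of $a$ over those rounds, $c_t(\tau,a)=\sqrt{\xi\log(\min(t,\tau))/N_t(\tau,a)}$; pull arm $t$ for $t\le K$, then $\arg\max_a\bar X_t(\tau,a)+c_t(\tau,a)$. $N_t(a)=\sum_{s\le t}\mathbf1(a_s=a)$, and $D_t(\tau,a)=\sum_{s\le t}\mathbf1(a_s=a)\delta_s$ is the total reward drift contributed by arm $a$ up to time $t$. *)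

(* Defs.v *)
From HB Require Import structures.
From mathcomp Require Import all_boot all_order all_algebra.
From mathcomp Require Import reals exp.
Set Implicit Arguments. Unset Strict Implicit. Unset Printing Implicit Defensive.
Import Order.TTheory GRing.Theory Num.Theory.
Local Open Scope ring_scope.

(* Rounds are numbered 1, 2, ...; arms 1..K are the ordinals 'I_K
   (arm number k+1 is the ordinal k).  [a s] is the arm recommended (and
   pulled) at round s, [r s] the observed reward at round s. *)

Definition Nwin (K tau : nat) (a : nat -> 'I_K) (t : nat) (i : 'I_K) : nat :=
  \sum_(maxn 1 (t - tau) <= s < t) (a s == i).

(* \bar X_t(tau, i): average observed reward of arm i over those rounds
   (MathComp convention x / 0 = 0 when the arm was not pulled). *)
Definition Xbar {R : realType} (K tau : nat) (a : nat -> 'I_K) (r : nat -> R)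
    (t : nat) (i : 'I_K) : R :=
  (\sum_(maxn 1 (t - tau) <= s < t | a s == i) r s) / (Nwin tau a t i)%:R.

Definition cbonus {R : realType} (K tau : nat) (xi : R) (a : nat -> 'I_K)
    (t : nat) (i : 'I_K) : R :=
  Num.sqrt (xi * ln (minn t tau)%:R / (Nwin tau a t i)%:R).

Definition Ntot (K : nat) (a : nat -> 'I_K) (t : nat) (i : 'I_K) : nat :=
  \sum_(1 <= s < t.+1) (a s == i).

Definition Drift {R : realType} (K : nat) (a : nat -> 'I_K) (delta : nat -> R)
    (t : nat) (i : 'I_K) : R :=
  \sum_(1 <= s < t.+1 | a s == i) delta s.

(* X t i: true reward of arm i at round t; f t: drift function;
   g t: greedy choice; delta t: drift; r t: observed reward.
   Ties in the argmax's are broken arbitrarily. *)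
Definition sw_ucb_run {R : realType} (K T tau : nat) (xi : R)
    (X : nat -> 'I_K -> R) (f : nat -> R -> R)
    (a g : nat -> 'I_K) (delta r : nat -> R) : Prop :=
  forall t, (1 <= t <= T)%N ->
    [/\ (t <= K)%N -> (val (a t) = t.-1)%N /\ delta t = 0,
        (K < t)%N ->
          [/\ forall i, Xbar tau a r t i + cbonus tau xi a t i
                        <= Xbar tau a r t (a t) + cbonus tau xi a t (a t),
              forall i, Xbar tau a r t i <= Xbar tau a r t (g t)
            & delta t = if a t != g t
                        then f t (Xbar tau a r t (g t) - Xbar tau a r t (a t))
                        else 0]
      & r t = X t (a t) + delta t].

Definition lmax {R : realType} (T : nat) (lt : nat -> R) : R :=
  \big[Num.max/0]_(1 <= s < T.+1) lt s.

(* Main.v *)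
Require Import Defs.
From HB Require Import structures.
From mathcomp Require Import all_boot all_order all_algebra.
From mathcomp Require Import reals exp.
From mathcomp Require Import lra.
Import Order.TTheory GRing.Theory Num.Theory.
Local Open Scope ring_scope.

Lemma lmax_ge0 {R : realType} (T : nat) (lt : nat -> R) : 0 <= lmax T lt.
Proof.
rewrite /lmax; elim: (index_iota _ _) => [|x s IH]; rewrite ?big_nil ?big_cons //.
by rewrite le_max IH orbT.
Qed.

Lemma lmax_ge {R : realType} (T : nat) (lt : nat -> R) s :
  (1 <= s <= T)%N -> lt s <= lmax T lt.
Proof.
move=> Hs; rewrite /lmax; apply: (le_bigmax_seq _ s) => //.
by rewrite mem_index_iota ltnS.
Qed.

Theorem lemma4 (R : realType) (K T tau : nat) (xi : R)
    (X : nat -> 'I_K -> R) (f : nat -> R -> R) (lt : nat -> R)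
    (a g : nat -> 'I_K) (delta r : nat -> R) :
  (0 < K)%N -> (0 < tau)%N -> 0 < xi ->
  (forall t i, 0 <= X t i <= 1) ->
  (forall t, (1 <= t <= T)%N -> {homo f t : x y / x <= y}) ->
  (forall t, (1 <= t <= T)%N -> f t 0 = 0) ->
  (forall t, (1 <= t <= T)%N -> forall x y, `|f t x - f t y| <= lt t * `|x - y|) ->
  sw_ucb_run T tau xi X f a g delta r ->
  forall (t : nat) (i : 'I_K), (1 <= t <= T)%N ->
    Drift a delta t i
      <= lmax T lt * (Ntot a t i)%:R * Num.sqrt (xi * ln (minn t tau)%:R).
Proof.
move=> K0 tau0 xi0 _ _ f0 Lip run t i /andP[t1 tT].
set B := lmax T lt * Num.sqrt (xi * ln (minn t tau)%:R).
have lnpos : forall n, (1 <= n)%N -> 0 <= ln (n%:R : R).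
  by move=> n n1; apply: ln_ge0; rewrite ler1n.
have Lt0 : 0 <= xi * ln (minn t tau)%:R.
  by apply: mulr_ge0; [exact: ltW | apply: lnpos; rewrite leq_min t1].
have B0 : 0 <= B by rewrite mulr_ge0 ?lmax_ge0 ?sqrtr_ge0.
have step : forall s, (1 <= s <= t)%N -> delta s <= B.
  move=> s /andP[s1 st].
  have sT : (1 <= s <= T)%N by rewrite s1 (leq_trans st tT).
  have [Hle Hgt _] := run s sT.
  case: (leqP s K) => sK; first by rewrite (proj2 (Hle sK)).
  have [ucb greedy ->] := Hgt sK.
  case: ifP => // _.
  set chi := _ - _.
  have chi0 : 0 <= chi by rewrite subr_ge0 greedy.
  have chic : chi <= cbonus tau xi a s (a s).
    have := ucb (g s); have := sqrtr_ge0 (xi * ln (minn s tau)%:R / (Nwin tau a s (g s))%:R).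
    rewrite /cbonus /chi => H1 H2; lra.
  have cb : cbonus tau xi a s (a s) <= Num.sqrt (xi * ln (minn t tau)%:R).
    rewrite /cbonus ler_sqrt //.
    have Ls0 : 0 <= xi * ln (minn s tau)%:R.
      by apply: mulr_ge0; [exact: ltW | apply: lnpos; rewrite leq_min s1].
    apply: (@le_trans _ _ (xi * ln (minn s tau)%:R)).
      case N0: (Nwin tau a s (a s)) => [|n]; first by rewrite invr0 mulr0.
      rewrite ler_pdivrMr ?ltr0Sn //; apply: ler_peMr => //.
      by rewrite ler1n.
    apply: ler_wpM2l; first exact: ltW.
    rewrite ler_ln ?posrE ?ltr0n ?leq_min ?s1 ?t1 ?tau0 // ler_nat.
    by rewrite leq_min (leq_trans (geq_minl _ _) st) geq_minr.
  apply: (@le_trans _ _ (lt s * chi)).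
    have := Lip s sT chi 0; rewrite f0 // !subr0 (ger0_norm chi0) => H.
    exact: le_trans (ler_norm _) H.
  apply: (@le_trans _ _ (lmax T lt * chi)).
    by apply: ler_wpM2r => //; exact: lmax_ge.
  by rewrite /B; apply: ler_wpM2l; [exact: lmax_ge0 | exact: le_trans chic cb].
apply: (@le_trans _ _ (\sum_(1 <= s < t.+1) (a s == i)%:R * B)).
  rewrite /Drift big_mkcond /=; apply: ler_sum_nat => s /andP[s1 st].
  case: ifP => _; rewrite ?mul1r ?mul0r //.
  by apply: step; rewrite s1 -ltnS st.
by rewrite /Ntot mulrAC -/B mulrC natr_sum mulr_suml.
Qed.
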